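(* For the unique formal series solution $(f^{0,+},g^{0,+})$ of $q$-$P(A_1)$ with $F^{0,+}_{1,1}=1$, $G^{0,+}_{1,1}=\Lambda$, the coefficients of $t^1$ are $$F_1^{0,+}(\phi)=\sum_{i\le1}F^{0,+}_{1,i}\phi^i=\phi+F_{\rm eq}+\mu\phi^{-1},\qquad G_1^{0,+}(\phi)=\sum_{i\le1}G^{0,+}_{1,i}\phi^i=\Lambda\phi+G_{\rm eq}+\frac{b_1b_2b_3b_4}{\Lambda}\mu\phi^{-1},$$ i.e. $F^{0,+}_{1,i}=G^{0,+}_{1,i}=0$ for $i\le-2$.
   Context: Parameters $\mathbf b=(b_1,\dots,b_8)\in(\mathbb C^* )^8$, $q=\frac{b_1b_2b_3b_4}{b_5b_6b_7b_8}$, $B=b_1b_2b_3b_4$. The equation $q$-$P(A_1)$ for $f=f(t)$, $g=g(t)$ is $$(gf-t^2)(g\bar f-qt^2)(g-b_5)(g-b_6)(g-b_7)(g-b_8)=(gf-1)(g\bar f-1)(g-b_1t)(g-b_2t)(g-b_3t)(g-b_4t),$$ $$(g\bar f-qt^2)(\bar g\bar f-q^2t^2)(\bar f-b_5^{-1})(\bar f-b_6^{-1})(\bar f-b_7^{-1})(\bar f-b_8^{-1})=(g\bar f-1)(\bar g\bar f-1)(\bar f-b_1^{-1}qt)(\bar f-b_2^{-1}qt)(\bar f-b_3^{-1}qt)(\bar f-b_4^{-1}qt).$$ Formal setting: $\Lambda,\phi$ are indeterminates, $\lambda=\Lambda^2/B$; formal solutions are pairs $f=\sum_{n\ge1}\sum_{i\le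 n}F_{n,i}\phi^it^n$, $g=\sum_{n\ge1}\sum_{i\le n}G_{n,i}\phi^it^n$ (coefficients depending on $(\Lambda,\mathbf b)$) satisfying both equations identically, where the shift is $t\mapsto qt$, $\phi\mapsto\lambda\phi$, $\Lambda\mapsto\Lambda$. There is a unique such solution with $F_{1,1}=1$, $G_{1,1}=\Lambda$, denoted $(f^{0,+},g^{0,+})$ with coefficients $F^{0,+}_{n,i},G^{0,+}_{n,i}$. $S_i^{\pm}$ is the $i$-th elementary symmetric polynomial in $b_1^{\pm1},\dots,b_4^{\pm1}$, and $F_{\rm eq}=-\frac{B\Lambda(S_1^++2S_1^-\Lambda+S_3^-\Lambda^2)}{(B-\Lambda^2)^2}$, $G_{\rm eq}=-\frac{B\Lambda(S_3^++2S_1^+\Lambda+S_1^-\Lambda^2)}{(B-\Lambda^2)^2}$, $\mu=\frac{\Lambda\prod_{1\le a<c\le4}(\Lambda+b_ab_c)}{(B-\Lambda^2)^4}$. *)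

(* Defs.v *)
From HB Require Import structures.
From mathcomp Require Import all_boot all_order all_algebra fraction.
Set Implicit Arguments. Unset Strict Implicit. Unset Printing Implicit Defensive.
Import Order.TTheory GRing.Theory Num.Theory.
Local Open Scope ring_scope.

(* Coefficient field: rational functions Q(b1,...,b8,Lambda) in 9 indeterminates,
   built as the fraction field of the 9-fold iterated polynomial ring over rat. *)
Definition P1 : idomainType := {poly rat}.
Definition P2 : idomainType := {poly P1}.
Definition P3 : idomainType := {poly P2}.
Definition P4 : idomainType := {poly P3}.
Definition P5 : idomainType := {poly P4}.
Definition P6 : idomainType := {poly P5}.
Definition P7 : idomainType := {poly P6}.
Definition P8 : idomainType := {poly P7}.
Definition P9 : idomainType := {poly P8}.
Definition K : fieldType := {fraction P9}.
Definition tofracK (x : P9) : K := @FracField.tofrac P9 x.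

Definition u2 (x : P1) : P2 := x%:P.
Definition u3 (x : P2) : P3 := x%:P.
Definition u4 (x : P3) : P4 := x%:P.
Definition u5 (x : P4) : P5 := x%:P.
Definition u6 (x : P5) : P6 := x%:P.
Definition u7 (x : P6) : P7 := x%:P.
Definition u8 (x : P7) : P8 := x%:P.
Definition u9 (x : P8) : P9 := x%:P.

Definition X1 : P9 := u9 (u8 (u7 (u6 (u5 (u4 (u3 (u2 ('X : {poly rat})))))))).
Definition X2 : P9 := u9 (u8 (u7 (u6 (u5 (u4 (u3 ('X : {poly P1}))))))).
Definition X3 : P9 := u9 (u8 (u7 (u6 (u5 (u4 ('X : {poly P2})))))).
Definition X4 : P9 := u9 (u8 (u7 (u6 (u5 ('X : {poly P3}))))).
Definition X5 : P9 := u9 (u8 (u7 (u6 ('X : {poly P4})))).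
Definition X6 : P9 := u9 (u8 (u7 ('X : {poly P5}))).
Definition X7 : P9 := u9 (u8 ('X : {poly P6})).
Definition X8 : P9 := u9 ('X : {poly P7}).
Definition X9 : P9 := ('X : {poly P8}).

Definition b1 : K := tofracK X1.
Definition b2 : K := tofracK X2.
Definition b3 : K := tofracK X3.
Definition b4 : K := tofracK X4.
Definition b5 : K := tofracK X5.
Definition b6 : K := tofracK X6.
Definition b7 : K := tofracK X7.
Definition b8 : K := tofracK X8.
Definition Lam : K := tofracK X9.

Definition BB : K := b1 * b2 * b3 * b4.
Definition qq : K := BB / (b5 * b6 * b7 * b8).
Definition lam : K := Lam ^+ 2 / BB.

(* Formal double series  sum_{n >= 0} sum_{i in Z} a n i * phi^i * t^n,
   represented by coefficient arrays. Only arrays with a n i = 0 for i > n are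
   considered ("i <= n"); the product below is the Cauchy product for such arrays
   (all inner sums are then finite). *)
Definition ser := nat -> int -> K.

Definition sadd (a b : ser) : ser := fun n i => a n i + b n i.
Definition ssub (a b : ser) : ser := fun n i => a n i - b n i.

(* (a*b)_{n,i} = sum_{m=0}^{n} sum_{i1 = i-n+m}^{m} a_{m,i1} b_{n-m,i-i1},
   with i1 = m - j, 0 <= j <= n - i ; zero if i > n. *)
Definition smul (a b : ser) : ser := fun n i =>
  if i <= n%:Z then
    \sum_(m < n.+1) \sum_(j < (absz (n%:Z - i)).+1)
       a m (m%:Z - j%:Z) * b (n - m)%N (i - m%:Z + j%:Z)
  else 0.

Definition tmon (k : nat) (c : K) : ser := fun n i =>
  if (n == k) && (i == 0) then c else 0.

Definition sprod (s : seq ser) : ser := foldr smul (tmon 0 1) s.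

(* the shift t -> q t, phi -> lambda phi (Lambda, b fixed) *)
Definition shift (a : ser) : ser := fun n i => qq ^+ n * lam ^ i * a n i.

Definition supported (a : ser) : Prop :=
  forall n i, ((n == 0)%N || (n%:Z < i)) -> a n i = 0.

Definition qPA1_eq1 (f g : ser) : Prop :=
  let fb := shift f in
  sprod [:: ssub (smul g f) (tmon 2 1); ssub (smul g fb) (tmon 2 qq);
            ssub g (tmon 0 b5); ssub g (tmon 0 b6); ssub g (tmon 0 b7); ssub g (tmon 0 b8)]
  = sprod [:: ssub (smul g f) (tmon 0 1); ssub (smul g fb) (tmon 0 1);
            ssub g (tmon 1 b1); ssub g (tmon 1 b2); ssub g (tmon 1 b3); ssub g (tmon 1 b4)].

Definition qPA1_eq2 (f g : ser) : Prop :=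
  let fb := shift f in
  let gb := shift g in
  sprod [:: ssub (smul g fb) (tmon 2 qq); ssub (smul gb fb) (tmon 2 (qq ^+ 2));
            ssub fb (tmon 0 b5^-1); ssub fb (tmon 0 b6^-1);
            ssub fb (tmon 0 b7^-1); ssub fb (tmon 0 b8^-1)]
  = sprod [:: ssub (smul g fb) (tmon 0 1); ssub (smul gb fb) (tmon 0 1);
            ssub fb (tmon 1 (b1^-1 * qq)); ssub fb (tmon 1 (b2^-1 * qq));
            ssub fb (tmon 1 (b3^-1 * qq)); ssub fb (tmon 1 (b4^-1 * qq))].

Definition formal_solution (f g : ser) : Prop :=
  supported f /\ supported g /\ qPA1_eq1 f g /\ qPA1_eq2 f g.

Definition S1p : K := b1 + b2 + b3 + b4.
Definition S3p : K := b1*b2*b3 + b1*b2*b4 + b1*b3*b4 + b2*b3*b4.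
Definition S1m : K := b1^-1 + b2^-1 + b3^-1 + b4^-1.
Definition S3m : K := b1^-1*b2^-1*b3^-1 + b1^-1*b2^-1*b4^-1
                    + b1^-1*b3^-1*b4^-1 + b2^-1*b3^-1*b4^-1.

Definition Feq : K :=
  - (BB * Lam * (S1p + 2 * S1m * Lam + S3m * Lam ^+ 2)) / (BB - Lam ^+ 2) ^+ 2.
Definition Geq : K :=
  - (BB * Lam * (S3p + 2 * S1p * Lam + S1m * Lam ^+ 2)) / (BB - Lam ^+ 2) ^+ 2.
Definition mu : K :=
  Lam * ((Lam + b1*b2) * (Lam + b1*b3) * (Lam + b1*b4) * (Lam + b2*b3)
         * (Lam + b2*b4) * (Lam + b3*b4)) / (BB - Lam ^+ 2) ^+ 4.

(* Main.v *)
Require Import Defs.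
From HB Require Import structures.
From mathcomp Require Import all_boot all_order all_algebra fraction.
From mathcomp Require Import ring zify.
From Stdlib Require Import FunctionalExtensionality.
Set Implicit Arguments. Unset Strict Implicit. Unset Printing Implicit Defensive.
Import GRing.Theory.
Local Open Scope ring_scope.

Section Gen.
Variable R : fieldType.

Definition cp (U V : nat -> R) : nat -> R := fun m => \sum_(j < m.+1) U j * V (m - j)%N.
Definition dd (k : nat) (c : R) : nat -> R := fun m => if m == k then c else 0.
Definition supp (n : nat) (U : nat -> R) := forall j, (n < j)%N -> U j = 0.
Definition agree (m : nat) (U U' : nat -> R) := forall j, (j < m)%N -> U j = U' j.
Definition lin m U U' (c : R) := agree m U U' /\ U m - U' m = c.

Lemma cp0 U V : cp U V 0 = U 0%N * V 0%N.
Proof. by rewrite /cp big_ord1 subnn. Qed.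

Lemma supp_cp a c U V : supp a U -> supp c V -> supp (a + c) (cp U V).
Proof.
move=> hU hV m hm; rewrite /cp big1 // => j _.
case: (leqP j a) => hj; first by rewrite hV ?mulr0 //; lia.
by rewrite hU ?mul0r.
Qed.

Lemma supp_sub n U V : supp n U -> supp n V -> supp n (fun m => U m - V m).
Proof. by move=> hU hV j hj; rewrite hU ?hV ?subr0. Qed.

Lemma supp_le n n' U : (n <= n')%N -> supp n U -> supp n' U.
Proof. move=> hn hU j hj; apply: hU; lia. Qed.

Lemma supp_dd k c n : (k <= n)%N -> supp n (dd k c).
Proof. move=> hk j hj; rewrite /dd; case: eqP => // hjk; lia. Qed.

Lemma agree_cp m U U' V V' : agree m U U' -> agree m V V' -> agree m (cp U V) (cp U' V').
Proof.
move=> hU hV j hj; apply: eq_bigr => i _.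
have := ltn_ord i => hi.
rewrite hU ?hV //; lia.
Qed.

Lemma diff_cp m U U' V V' : (0 < m)%N -> agree m U U' -> agree m V V' ->
  cp U V m - cp U' V' m = U 0%N * (V m - V' m) + (U m - U' m) * V 0%N.
Proof.
case: m => // n _ hU hV.
rewrite /cp !(big_ord_recr n.+1) !(big_ord_recl n) /=.
rewrite !subn0 !subnn.
have -> : \sum_(i < n) U (bump 0 i) * V (n.+1 - bump 0 i)%N
  = \sum_(i < n) U' (bump 0 i) * V' (n.+1 - bump 0 i)%N.
  apply: eq_bigr => i _; have := ltn_ord i => hi.
  rewrite /bump /= hU ?hV //; lia.
rewrite (hU 0%N) // (hV 0%N) //.
ring.
Qed.




Lemma lin_cp m U U' V V' a b : (0 < m)%N -> lin m U U' a -> lin m V V' b ->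
  lin m (cp U V) (cp U' V') (U 0%N * b + a * V 0%N).
Proof.
move=> hm [hU ha] [hV hb]; split; first exact: agree_cp.
by rewrite diff_cp // ha hb.
Qed.

Lemma lin_subc m U U' W a : lin m U U' a -> lin m (fun k => U k - W k) (fun k => U' k - W k) a.
Proof.
move=> [hU ha]; split; first by move=> j hj; rewrite hU.
by rewrite -ha; ring.
Qed.

Variables b1 b2 b3 b4 L : R.
Hypotheses (nb1 : b1 != 0) (nb2 : b2 != 0) (nb3 : b3 != 0) (nb4 : b4 != 0) (nL : L != 0)
  (nD : b1 * b2 * b3 * b4 - L ^+ 2 != 0).

Definition gBB : R := b1 * b2 * b3 * b4.
Definition glam : R := L ^+ 2 / gBB.
Definition gS1p : R := b1 + b2 + b3 + b4.
Definition gS3p : R := b1*b2*b3 + b1*b2*b4 + b1*b3*b4 + b2*b3*b4.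
Definition gS1m : R := b1^-1 + b2^-1 + b3^-1 + b4^-1.
Definition gS3m : R := b1^-1*b2^-1*b3^-1 + b1^-1*b2^-1*b4^-1
                    + b1^-1*b3^-1*b4^-1 + b2^-1*b3^-1*b4^-1.
Definition gFeq : R :=
  - (gBB * L * (gS1p + 2 * gS1m * L + gS3m * L ^+ 2)) / (gBB - L ^+ 2) ^+ 2.
Definition gGeq : R :=
  - (gBB * L * (gS3p + 2 * gS1p * L + gS1m * L ^+ 2)) / (gBB - L ^+ 2) ^+ 2.
Definition gmu : R :=
  L * ((L + b1*b2) * (L + b1*b3) * (L + b1*b4) * (L + b2*b3)
         * (L + b2*b4) * (L + b3*b4)) / (gBB - L ^+ 2) ^+ 4.

Definition shl (F : nat -> R) : nat -> R := fun m => glam * glam^-1 ^+ m * F m.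
Definition c1 F G : nat -> R := fun m => cp G F m - dd 2 1 m.
Definition c2 F G : nat -> R := fun m => cp G (shl F) m - dd 2 1 m.
Definition c3 F G : nat -> R := fun m => cp (shl G) (shl F) m - dd 2 1 m.
Definition pG (b : R) G : nat -> R := fun m => G m - dd 1 b m.
Definition pF (b : R) F : nat -> R := fun m => shl F m - dd 1 b^-1 m.
Definition E1 F G m := gBB * cp (c1 F G) (c2 F G) m
  - cp (pG b1 G) (cp (pG b2 G) (cp (pG b3 G) (pG b4 G))) m.
Definition E2 F G m := cp (c2 F G) (c3 F G) m
  - gBB * cp (pF b1 F) (cp (pF b2 F) (cp (pF b3 F) (pF b4 F))) m.

Definition Fs (m : nat) : R := match m with 0 => 1 | 1 => gFeq | 2 => gmu | _ => 0 end.
Definition Gs (m : nat) : R := match m with 0 => L | 1 => gGeq | 2 => gBB / L * gmu | _ => 0 end.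

Lemma supp_shl n U : supp n U -> supp n (shl U).
Proof. by move=> hU j hj; rewrite /shl hU ?mulr0. Qed.

Lemma supp_Fs : supp 2 Fs. Proof. by case=> [|[|[|j]]]. Qed.
Lemma supp_Gs : supp 2 Gs. Proof. by case=> [|[|[|j]]]. Qed.

Lemma supp_E1 m : (8 < m)%N -> E1 Fs Gs m = 0.
Proof.
move=> hm; rewrite /E1.
have s1 : supp 4 (c1 Fs Gs).
  apply: supp_sub; [exact: (supp_cp supp_Gs supp_Fs) | exact: supp_dd].
have s2 : supp 4 (c2 Fs Gs).
  apply: supp_sub; [exact: (supp_cp supp_Gs (supp_shl supp_Fs)) | exact: supp_dd].
have sp : forall b, supp 2 (pG b Gs) by move=> b; apply: supp_sub; [exact: supp_Gs|exact: supp_dd].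
rewrite (supp_cp s1 s2) // (supp_cp (sp b1) (supp_cp (sp b2) (supp_cp (sp b3) (sp b4)))) //.
by rewrite mulr0 subr0.
Qed.

Lemma supp_E2 m : (8 < m)%N -> E2 Fs Gs m = 0.
Proof.
move=> hm; rewrite /E2.
have s2 : supp 4 (c2 Fs Gs).
  apply: supp_sub; [exact: (supp_cp supp_Gs (supp_shl supp_Fs)) | exact: supp_dd].
have s3 : supp 4 (c3 Fs Gs).
  apply: supp_sub; [exact: (supp_cp (supp_shl supp_Gs) (supp_shl supp_Fs)) | exact: supp_dd].
have sp : forall b, supp 2 (pF b Fs).
  by move=> b; apply: supp_sub; [exact: (supp_shl supp_Fs)|exact: supp_dd].
rewrite (supp_cp s2 s3) // (supp_cp (sp b1) (supp_cp (sp b2) (supp_cp (sp b3) (sp b4)))) //.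
by rewrite mulr0 subr0.
Qed.

Ltac ev := rewrite /E1 /E2 /c1 /c2 /c3 /pG /pF /shl /cp /dd;
  do ![rewrite big_ord_recr /= | rewrite big_ord0 /=];
  rewrite /glam /gFeq /gGeq /gmu /gS1p /gS3p /gS1m /gS3m /gBB;
  field; by rewrite ?nD ?nL ?nb1 ?nb2 ?nb3 ?nb4.

Lemma cand1 m : E1 Fs Gs m = 0.
Proof.
case: (ltnP 8 m) => hm; first exact: supp_E1.
do 9 (case: m hm => [|m] hm; first by ev).
by [].
Qed.

Lemma cand2 m : E2 Fs Gs m = 0.
Proof.
case: (ltnP 8 m) => hm; first exact: supp_E2.
do 9 (case: m hm => [|m] hm; first by ev).
by [].
Qed.

Hypothesis nlam : forall m, (0 < m)%N -> glam ^+ m != 1.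

Lemma nBB : gBB != 0.
Proof. by rewrite /gBB !mulf_neq0. Qed.

Lemma nglam : glam != 0.
Proof. by rewrite /glam mulf_neq0 ?invr_eq0 ?expf_neq0 ?nBB. Qed.

Lemma lin_shl m U U' a : lin m U U' a -> lin m (shl U) (shl U') (glam * glam^-1 ^+ m * a).
Proof.
move=> [hU ha]; split; first by move=> j hj; rewrite /shl hU.
by rewrite /shl -ha; ring.
Qed.

Lemma solve2 (a1 e1 a2 e2 x y : R) : a1 * x + e1 * y = 0 -> a2 * x + e2 * y = 0 ->
  a1 * e2 - a2 * e1 != 0 -> x = 0 /\ y = 0.
Proof.
move=> h1 h2 hd.
have hx : (a1 * e2 - a2 * e1) * x = e2 * (a1 * x + e1 * y) - e1 * (a2 * x + e2 * y) by ring.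
have hy : (a1 * e2 - a2 * e1) * y = a1 * (a2 * x + e2 * y) - a2 * (a1 * x + e1 * y) by ring.
rewrite h1 h2 !mulr0 subr0 in hx hy.
move/eqP: hx; rewrite mulf_eq0 (negbTE hd) /= => /eqP ->.
move/eqP: hy; rewrite mulf_eq0 (negbTE hd) /= => /eqP ->.
by [].
Qed.

Lemma step m F G : (0 < m)%N -> F 0%N = 1 -> G 0%N = L -> agree m F Fs -> agree m G Gs ->
  E1 F G m = 0 -> E2 F G m = 0 -> F m = Fs m /\ G m = Gs m.
Proof.
move=> hm hF0 hG0 aF aG h1 h2.
have lF : lin m F Fs (F m - Fs m) by split.
have lG : lin m G Gs (G m - Gs m) by split.
have [_ d1] := lin_cp hm (lin_subc (dd 2 1) (lin_cp hm lG lF))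
                         (lin_subc (dd 2 1) (lin_cp hm lG (lin_shl lF))).
have [_ dp] := lin_cp hm (lin_subc (dd 1 b1) lG) (lin_cp hm (lin_subc (dd 1 b2) lG)
                 (lin_cp hm (lin_subc (dd 1 b3) lG) (lin_subc (dd 1 b4) lG))).
have [_ d2] := lin_cp hm (lin_subc (dd 2 1) (lin_cp hm lG (lin_shl lF)))
                         (lin_subc (dd 2 1) (lin_cp hm (lin_shl lG) (lin_shl lF))).
have [_ dq] := lin_cp hm (lin_subc (dd 1 b1^-1) (lin_shl lF)) (lin_cp hm (lin_subc (dd 1 b2^-1) (lin_shl lF))
                 (lin_cp hm (lin_subc (dd 1 b3^-1) (lin_shl lF)) (lin_subc (dd 1 b4^-1) (lin_shl lF)))).
have e1 : gBB * (cp (c1 F G) (c2 F G) m - cp (c1 Fs Gs) (c2 Fs Gs) m)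
   - (cp (pG b1 G) (cp (pG b2 G) (cp (pG b3 G) (pG b4 G))) m
      - cp (pG b1 Gs) (cp (pG b2 Gs) (cp (pG b3 Gs) (pG b4 Gs))) m) = 0.
  transitivity (E1 F G m - E1 Fs Gs m); first by rewrite /E1; ring.
  by rewrite h1 cand1 subrr.
have e2 : (cp (c2 F G) (c3 F G) m - cp (c2 Fs Gs) (c3 Fs Gs) m)
   - gBB * (cp (pF b1 F) (cp (pF b2 F) (cp (pF b3 F) (pF b4 F))) m
      - cp (pF b1 Fs) (cp (pF b2 Fs) (cp (pF b3 Fs) (pF b4 Fs))) m) = 0.
  transitivity (E2 F G m - E2 Fs Gs m); first by rewrite /E2; ring.
  by rewrite h2 cand2 subrr.
rewrite d1 dp in e1. rewrite d2 dq in e2.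
rewrite /shl !cp0 /dd /= hF0 hG0 in e1 e2.
have hs : glam^-1 ^+ m != 1 by rewrite exprVn invr_eq1 nlam.
move: hs e1 e2; generalize (glam^-1 ^+ m) => s hs e1 e2.
have e1' : (L^+4 * (s+1)) * (F m - Fs m) + (-2 * L^+3) * (G m - Gs m) = 0.
  by rewrite -[RHS]e1 /glam; field; rewrite ?invr_eq0 ?nBB ?nL ?nb1 ?nb2 ?nb3 ?nb4.
have e2' : (-2 * L^+2 * glam^+3 * s) * (F m - Fs m) + (L * glam^+3 * (s+1)) * (G m - Gs m) = 0.
  by rewrite -[RHS]e2 /glam; field; rewrite ?invr_eq0 ?nBB ?nL ?nb1 ?nb2 ?nb3 ?nb4.
have := solve2 e1' e2'.
have -> : L ^+ 4 * (s + 1) * (L * glam ^+ 3 * (s + 1)) - -2 * L ^+ 2 * glam ^+ 3 * s * (-2 * L ^+ 3)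
   = L ^+ 5 * glam ^+ 3 * (s - 1) ^+ 2 by ring.
rewrite !mulf_neq0 ?expf_neq0 ?nglam ?subr_eq0 ?hs ?nL ?invr_eq0 ?nBB //.
by case/(_ isT) => /subr0_eq -> /subr0_eq ->.
Qed.

Lemma uniqFG F G : F 0%N = 1 -> G 0%N = L -> (forall m, E1 F G m = 0) -> (forall m, E2 F G m = 0) ->
  forall m, F m = Fs m /\ G m = Gs m.
Proof.
move=> hF0 hG0 h1 h2.
suff H : forall n m, (m <= n)%N -> F m = Fs m /\ G m = Gs m by move=> m; exact: (H m).
elim=> [|n IH] m hm.
  have -> : m = 0%N by lia.
  by rewrite hF0 hG0.
case: (leqP m n) => hmn; first exact: IH.
have -> : m = n.+1 by lia.
apply: step => //; move=> j hj; have [] := IH j _ => //; lia.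
Qed.

Lemma dd_neg0 b j : 0 - dd 0 b j = dd 0 (- b) j.
Proof. by rewrite /dd; case: ifP => _; rewrite ?sub0r ?oppr0. Qed.

Lemma dd_scale k c d j : dd k (c * d) j = c * dd k d j.
Proof. by rewrite /dd; case: ifP => _; rewrite ?mulr0. Qed.

Lemma dd_scale1 k c j : dd k c j = c * dd k 1 j.
Proof. by rewrite /dd; case: ifP => _; rewrite ?mulr0 ?mulr1. Qed.

Lemma cp_dd0 U V a c : (forall j, U j = dd 0 a j) -> (forall j, V j = dd 0 c j) ->
  forall k, cp U V k = dd 0 (a * c) k.
Proof.
move=> hU hV k; rewrite /cp big_ord_recl big1 ?addr0; last first.
  by move=> j _; rewrite hU /dd /= mul0r.
by rewrite hU hV /dd /= subn0; case: ifP => _; rewrite ?mulr0.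
Qed.

Lemma cp_ddr U V c : (forall j, V j = dd 0 c j) -> forall k, cp U V k = U k * c.
Proof.
move=> hV k; rewrite /cp big_ord_recr /= subnn big1 ?add0r; first by rewrite hV.
move=> j _; rewrite hV /dd; have := ltn_ord j => hj.
have -> : (k - j == 0)%N = false by apply/negbTE; lia.
by rewrite mulr0.
Qed.

Lemma cp_ddl U V c : (forall j, U j = dd 0 c j) -> forall k, cp U V k = c * V k.
Proof.
move=> hU k; rewrite /cp big_ord_recl big1 ?addr0; last first.
  by move=> j _; rewrite hU /dd /= mul0r.
by rewrite hU /dd /= subn0.
Qed.

Lemma cp_scal U V V' c : (forall j, V j = c * V' j) -> forall k, cp U V k = c * cp U V' k.
Proof. by move=> hV k; rewrite /cp mulr_sumr; apply: eq_bigr => j _; rewrite hV mulrCA. Qed.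

Lemma cp_scall U U' V c : (forall j, U j = c * U' j) -> forall k, cp U V k = c * cp U' V k.
Proof. by move=> hU k; rewrite /cp mulr_sumr; apply: eq_bigr => j _; rewrite hU mulrA. Qed.

Lemma eq_cp U U' V V' : (forall j, U j = U' j) -> (forall j, V j = V' j) ->
  forall k, cp U V k = cp U' V' k.
Proof. by move=> hU hV k; apply: eq_bigr => j _; rewrite hU hV. Qed.

Lemma raw1L F G qq b5 b6 b7 b8 m :
  cp (fun k => cp G F k - dd 2 1 k)
   (cp (fun k => cp G (fun j => qq * shl F j) k - dd 2 qq k)
     (cp (fun k => 0 - dd 0 b5 k) (cp (fun k => 0 - dd 0 b6 k)
       (cp (fun k => 0 - dd 0 b7 k) (cp (fun k => 0 - dd 0 b8 k) (dd 0 1)))))) m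
  = qq * (b5 * b6 * b7 * b8) * cp (c1 F G) (c2 F G) m.
Proof.
have i6 := cp_dd0 (fun j => dd_neg0 b8 j) (fun j => erefl (dd 0 1 j)).
have i5 := cp_dd0 (fun j => dd_neg0 b7 j) i6.
have i4 := cp_dd0 (fun j => dd_neg0 b6 j) i5.
have i3 := cp_dd0 (fun j => dd_neg0 b5 j) i4.
rewrite (@cp_scal _ _ (c2 F G) (qq * (b5 * b6 * b7 * b8))) //.
move=> j; rewrite (cp_ddr _ i3) /c2 (@cp_scal _ _ (shl F) (qq)) //.
rewrite (dd_scale1 2 qq); ring.
Qed.

Lemma raw1R G m :
  cp (fun k => 0 - dd 0 1 k) (cp (fun k => 0 - dd 0 1 k)
    (cp (fun k => G k - dd 1 b1 k) (cp (fun k => G k - dd 1 b2 k)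
      (cp (fun k => G k - dd 1 b3 k) (cp (fun k => G k - dd 1 b4 k) (dd 0 1)))))) m
  = cp (pG b1 G) (cp (pG b2 G) (cp (pG b3 G) (pG b4 G))) m.
Proof.
rewrite (@cp_ddl _ _ (-1)); last by move=> j; rewrite dd_neg0.
rewrite (@cp_ddl _ _ (-1)); last by move=> j; rewrite dd_neg0.
rewrite !mulN1r opprK.
apply: eq_cp => // j; apply: eq_cp => // j'; apply: eq_cp => // j''.
by rewrite (@cp_ddr _ _ 1) // mulr1.
Qed.

Lemma raw2L F G qq b5 b6 b7 b8 m :
  cp (fun k => cp G (fun j => qq * shl F j) k - dd 2 qq k)
   (cp (fun k => cp (fun j => qq * shl G j) (fun j => qq * shl F j) k - dd 2 (qq ^+ 2) k)
     (cp (fun k => 0 - dd 0 b5^-1 k) (cp (fun k => 0 - dd 0 b6^-1 k)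
       (cp (fun k => 0 - dd 0 b7^-1 k) (cp (fun k => 0 - dd 0 b8^-1 k) (dd 0 1)))))) m
  = qq * qq ^+ 2 * (b5^-1 * b6^-1 * b7^-1 * b8^-1) * cp (c2 F G) (c3 F G) m.
Proof.
have i6 := cp_dd0 (fun j => dd_neg0 b8^-1 j) (fun j => erefl (dd 0 1 j)).
have i5 := cp_dd0 (fun j => dd_neg0 b7^-1 j) i6.
have i4 := cp_dd0 (fun j => dd_neg0 b6^-1 j) i5.
have i3 := cp_dd0 (fun j => dd_neg0 b5^-1 j) i4.
rewrite (@cp_scall _ (c2 F G) _ (qq)); last first.
  move=> j; rewrite /c2 (@cp_scal _ _ (shl F) (qq)) //.
  by rewrite (dd_scale1 2 qq) mulrBr.
rewrite (@cp_scal _ _ (c3 F G) (qq ^+ 2 * (b5^-1 * b6^-1 * b7^-1 * b8^-1))).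
  by rewrite !mulrA.
move=> j; rewrite (cp_ddr _ i3) /c3 (@cp_scal _ _ (shl F) (qq)) //.
rewrite (@cp_scall _ (shl G) _ (qq)) // (dd_scale1 2 (qq ^+ 2)); ring.
Qed.

Lemma raw2R F qq m :
  cp (fun k => 0 - dd 0 1 k) (cp (fun k => 0 - dd 0 1 k)
    (cp (fun k => qq * shl F k - dd 1 (b1^-1 * qq) k) (cp (fun k => qq * shl F k - dd 1 (b2^-1 * qq) k)
      (cp (fun k => qq * shl F k - dd 1 (b3^-1 * qq) k)
        (cp (fun k => qq * shl F k - dd 1 (b4^-1 * qq) k) (dd 0 1)))))) m
  = qq ^+ 4 * cp (pF b1 F) (cp (pF b2 F) (cp (pF b3 F) (pF b4 F))) m.
Proof.
have hp : forall b j, qq * shl F j - dd 1 (b^-1 * qq) j = qq * pF b F j.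
  by move=> b j; rewrite /pF mulrBr -dd_scale mulrC [b^-1 * qq]mulrC.
rewrite (@cp_ddl _ _ (-1)); last by move=> j; rewrite dd_neg0.
rewrite (@cp_ddl _ _ (-1)); last by move=> j; rewrite dd_neg0.
rewrite !mulN1r opprK.
rewrite (@cp_scall _ (pF b1 F) _ (qq)) //.
rewrite (@cp_scal _ _ (cp (pF b2 F) (cp (pF b3 F) (pF b4 F))) (qq ^+ 3)).
  by rewrite !exprS expr0 !mulrA mulr1.
move=> j; rewrite (@cp_scall _ (pF b2 F) _ (qq)) //.
rewrite (@cp_scal _ _ (cp (pF b3 F) (pF b4 F)) (qq ^+ 2)).
  by rewrite !exprS expr0 !mulrA mulr1.
move=> j'; rewrite (@cp_scall _ (pF b3 F) _ (qq)) //.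
rewrite (@cp_scal _ _ (pF b4 F) (qq)).
  by rewrite !exprS expr0 !mulrA mulr1.
by move=> j''; rewrite (@cp_ddr _ _ 1) // mulr1.
Qed.
End Gen.

Lemma gen_hq (R : fieldType) (b1 b2 b3 b4 b5 b6 b7 b8 : R) :
  b5 != 0 -> b6 != 0 -> b7 != 0 -> b8 != 0 ->
  b1 * b2 * b3 * b4 / (b5 * b6 * b7 * b8) * (b5 * b6 * b7 * b8) = b1 * b2 * b3 * b4.
Proof. by move=> h5 h6 h7 h8; field; rewrite h5 h6 h7 h8. Qed.

Lemma gen_h2 (R : fieldType) (b1 b2 b3 b4 b5 b6 b7 b8 x y : R) :
  b5 != 0 -> b6 != 0 -> b7 != 0 -> b8 != 0 -> b1 * b2 * b3 * b4 != 0 ->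
  b1 * b2 * b3 * b4 / (b5 * b6 * b7 * b8) * (b1 * b2 * b3 * b4 / (b5 * b6 * b7 * b8)) ^+ 2
    * (b5^-1 * b6^-1 * b7^-1 * b8^-1) * x
  = (b1 * b2 * b3 * b4 / (b5 * b6 * b7 * b8)) ^+ 4 * y ->
  x = b1 * b2 * b3 * b4 * y.
Proof.
move=> h5 h6 h7 h8 hB h.
have hB' : b5 * b6 * b7 * b8 != 0 by rewrite !mulf_neq0.
set q := b1 * b2 * b3 * b4 / (b5 * b6 * b7 * b8) in h.
have hq : q != 0 by rewrite /q mulf_neq0 ?invr_eq0.
have hc : q * q ^+ 2 * (b5^-1 * b6^-1 * b7^-1 * b8^-1) != 0.
  apply: mulf_neq0; first by apply: mulf_neq0; [exact: hq | exact: expf_neq0].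
  by rewrite !mulf_neq0 ?invr_eq0 ?h5 ?h6 ?h7 ?h8.
apply: (mulfI hc); rewrite h /q; field.
by rewrite h5 h6 h7 h8.
Qed.

Definition depth (a : ser) (p : nat) : nat -> K := fun m => a p (p%:Z - m%:Z).
Definition ord_ge (p : nat) (a : ser) := forall n i, (n < p)%N -> a n i = 0.

Lemma depth_smul p r a b : ord_ge p a -> ord_ge r b ->
  depth (smul a b) (p + r) = cp (depth a p) (depth b r).
Proof.
move=> ha hb; apply: functional_extensionality => m.
rewrite /depth /smul /cp.
have -> : (Posz (p + r) - Posz m <= Posz (p + r))%R = true by apply/idP; lia.
have -> : absz ((Posz (p + r) - (Posz (p + r) - Posz m))%R) = m by rewrite opprB addrCA subrr addr0.
have hp : (p < (p + r).+1)%N by lia.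
rewrite (bigD1 (Ordinal hp)) //=.
rewrite [X in _ + X]big1 ?addr0; last first.
  move=> i hi; apply: big1 => j _.
  have hi' : (i : nat) != p by apply: contraNneq hi => e; apply/eqP/val_inj.
  case: (ltnP i p) => hip; first by rewrite ha ?mul0r.
  have := ltn_ord i => hir.
  rewrite hb ?mulr0 //; lia.
apply: eq_bigr => j _; rewrite addKn; congr (_ * b r _).
have := ltn_ord j => hj; lia.
Qed.

Lemma ord_smul p r a b : ord_ge p a -> ord_ge r b -> ord_ge (p + r) (smul a b).
Proof.
move=> ha hb n i hn; rewrite /smul; case: ifP => // _.
apply: big1 => k _; apply: big1 => j _.
have := ltn_ord k => hk.
case: (ltnP k p) => hkp; first by rewrite ha ?mul0r.
rewrite hb ?mulr0 //; lia.
Qed.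

Lemma ord_ssub p a b : ord_ge p a -> ord_ge p b -> ord_ge p (ssub a b).
Proof. by move=> ha hb n i hn; rewrite /ssub ha ?hb ?subr0. Qed.

Lemma ord_tmon p k c : (p <= k)%N -> ord_ge p (tmon k c).
Proof.
move=> hk n i hn; rewrite /tmon.
have -> : (n == k) = false by apply/negbTE; lia.
by [].
Qed.

Lemma ord_shift p a : ord_ge p a -> ord_ge p (shift a).
Proof. by move=> ha n i hn; rewrite /shift ha ?mulr0. Qed.

Lemma ord_0 a : ord_ge 0 a.
Proof. by []. Qed.

Lemma depth_ssub a b p : depth (ssub a b) p = fun m => depth a p m - depth b p m.
Proof. by []. Qed.

Lemma depth_tmon k c : depth (tmon k c) k = dd k c.
Proof.
apply: functional_extensionality => m.
by rewrite /depth /tmon /dd eqxx /= subr_eq0 eqz_nat eq_sym.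
Qed.

Lemma depth_zero p a n : ord_ge p a -> (n < p)%N -> depth a n = fun _ => 0.
Proof. by move=> ha hn; apply: functional_extensionality => m; rewrite /depth ha. Qed.

Lemma Kb1 : b1 != 0.
Proof. by rewrite /b1 /tofracK tofrac_eq0 /X1 /u9 /u8 /u7 /u6 /u5 /u4 /u3 /u2 !polyC_eq0 polyX_eq0. Qed.
Lemma Kb2 : b2 != 0.
Proof. by rewrite /b2 /tofracK tofrac_eq0 /X2 /u9 /u8 /u7 /u6 /u5 /u4 /u3 !polyC_eq0 polyX_eq0. Qed.
Lemma Kb3 : b3 != 0.
Proof. by rewrite /b3 /tofracK tofrac_eq0 /X3 /u9 /u8 /u7 /u6 /u5 /u4 !polyC_eq0 polyX_eq0. Qed.
Lemma Kb4 : b4 != 0.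
Proof. by rewrite /b4 /tofracK tofrac_eq0 /X4 /u9 /u8 /u7 /u6 /u5 !polyC_eq0 polyX_eq0. Qed.
Lemma Kb5 : b5 != 0.
Proof. by rewrite /b5 /tofracK tofrac_eq0 /X5 /u9 /u8 /u7 /u6 !polyC_eq0 polyX_eq0. Qed.
Lemma Kb6 : b6 != 0.
Proof. by rewrite /b6 /tofracK tofrac_eq0 /X6 /u9 /u8 /u7 !polyC_eq0 polyX_eq0. Qed.
Lemma Kb7 : b7 != 0.
Proof. by rewrite /b7 /tofracK tofrac_eq0 /X7 /u9 /u8 !polyC_eq0 polyX_eq0. Qed.
Lemma Kb8 : b8 != 0.
Proof. by rewrite /b8 /tofracK tofrac_eq0 /X8 /u9 !polyC_eq0 polyX_eq0. Qed.
Lemma KLam : Lam != 0.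
Proof. by rewrite /Lam /tofracK tofrac_eq0 /X9 polyX_eq0. Qed.
Lemma KBB : BB != 0.
Proof. exact: (mulf_neq0 (mulf_neq0 (mulf_neq0 Kb1 Kb2) Kb3) Kb4). Qed.

Lemma KD : b1 * b2 * b3 * b4 - Lam ^+ 2 != 0.
Proof.
rewrite /b1 /b2 /b3 /b4 /Lam /tofracK -!tofracM -tofracXn -tofracB tofrac_eq0.
apply/eqP => h; have := congr1 (fun p : P9 => p`_2) h.
rewrite coefB coef0 /X1 /X2 /X3 /X4 /X9 /u9 -!polyCM coefC /= coefXn eqxx sub0r.
by move/eqP; rewrite oppr_eq0 oner_eq0.
Qed.

Lemma Klam m : (0 < m)%N -> lam ^+ m != 1.
Proof.
move=> hm; apply/eqP => h.
have h2 : Lam ^+ (2 * m) = BB ^+ m.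
  by move: h; rewrite /lam exprMn exprVn -exprM => h; apply: divr1_eq.
move: h2; rewrite /BB /b1 /b2 /b3 /b4 /Lam /tofracK -!tofracM -!tofracXn => /eqP.
rewrite tofrac_eq => /eqP h3.
have := congr1 (fun p : P9 => p`_(2 * m)) h3.
rewrite /X9 coefXn eqxx /X1 /X2 /X3 /X4 /u9 -!polyCM -polyC_exp coefC.
have -> : (2 * m == 0)%N = false by apply/negbTE; lia.
by move/eqP; rewrite oner_eq0.
Qed.

Lemma Klam0 : lam != 0.
Proof. by apply: mulf_neq0; [exact: expf_neq0 KLam | rewrite invr_eq0; exact: KBB]. Qed.

Lemma depth_shift1 a : depth (shift a) 1 = fun m => qq * shl b1 b2 b3 b4 Lam (depth a 1) m.
Proof.
apply: functional_extensionality => m.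
rewrite /depth /shift /shl expr1.
have -> : glam b1 b2 b3 b4 Lam = lam by [].
have e : lam ^ (1%:Z - m%:Z) = lam * lam^-1 ^+ m.
  rewrite expfzDr ?Klam0 // exprVn exprnN.
  congr (_ * _); exact: expr1z.
transitivity (qq * (lam * lam^-1 ^+ m) * a 1%N (1%:Z - m%:Z)); first by congr (_ * _ * _); exact: e.
by rewrite !mulrA.
Qed.

Lemma depth_prod6 p1 p2 p3 p4 p5 p6 x1 x2 x3 x4 x5 x6 :
  ord_ge p1 x1 -> ord_ge p2 x2 -> ord_ge p3 x3 -> ord_ge p4 x4 -> ord_ge p5 x5 -> ord_ge p6 x6 ->
  depth (sprod [:: x1; x2; x3; x4; x5; x6]) (p1 + (p2 + (p3 + (p4 + (p5 + (p6 + 0))))))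
  = cp (depth x1 p1) (cp (depth x2 p2) (cp (depth x3 p3) (cp (depth x4 p4)
      (cp (depth x5 p5) (cp (depth x6 p6) (depth (tmon 0 1) 0)))))).
Proof.
move=> h1 h2 h3 h4 h5 h6.
have h7 : ord_ge 0 (tmon 0 1) := ord_0 _.
have o6 := ord_smul h6 h7. have o5 := ord_smul h5 o6. have o4 := ord_smul h4 o5.
have o3 := ord_smul h3 o4. have o2 := ord_smul h2 o3.
rewrite /sprod /= (depth_smul h1 o2) (depth_smul h2 o3) (depth_smul h3 o4) (depth_smul h4 o5).
by rewrite (depth_smul h5 o6) (depth_smul h6 h7).
Qed.

Lemma hE1 f g : ord_ge 1 f -> ord_ge 1 g -> qPA1_eq1 f g ->
  forall m, E1 b1 b2 b3 b4 Lam (depth f 1) (depth g 1) m = 0.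
Proof.
move=> of1 og1 eq1 m.
have ofb := ord_shift of1.
unfold qPA1_eq1 in eq1; cbv zeta in eq1.
have H := congr1 (fun s => depth s 4 m) eq1; cbv beta in H.
have o1 : ord_ge 2 (ssub (smul g f) (tmon 2 1)).
  by apply: ord_ssub; [exact: ord_smul og1 of1 | apply: ord_tmon].
have o2 : ord_ge 2 (ssub (smul g (shift f)) (tmon 2 qq)).
  by apply: ord_ssub; [exact: ord_smul og1 ofb | apply: ord_tmon].
have r3 : forall c, ord_ge 1 (ssub g (tmon 1 c)).
  by move=> c; apply: ord_ssub; [exact: og1 | apply: ord_tmon].
have L1 := congr1 (fun h => h m) (depth_prod6 o1 o2 (ord_0 (ssub g (tmon 0 b5))) (ord_0 (ssub g (tmon 0 b6)))
   (ord_0 (ssub g (tmon 0 b7))) (ord_0 (ssub g (tmon 0 b8)))).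
have L2 := congr1 (fun h => h m) (depth_prod6 (ord_0 (ssub (smul g f) (tmon 0 1))) (ord_0 (ssub (smul g (shift f)) (tmon 0 1)))
   (r3 b1) (r3 b2) (r3 b3) (r3 b4)).
cbv beta in L1; cbv beta in L2.
have H2 := etrans (esym L1) (etrans H L2).
clear L1 L2 H.
have h7 : forall j, depth (tmon 0 1) 0 j = dd 0 1 j.
  by move=> j; exact: (congr1 (fun h => h j) (depth_tmon 0 1)).
have hz : forall c j, depth (ssub g (tmon 0 c)) 0 j = 0 - dd 0 c j.
  move=> c j; rewrite depth_ssub; congr (_ - _).
    exact: (congr1 (fun h => h j) (depth_zero og1 (isT : (0 < 1)%N))).
  exact: (congr1 (fun h => h j) (depth_tmon 0 c)).
have h1 : forall j, depth (ssub (smul g f) (tmon 2 1)) 2 j = cp (depth g 1) (depth f 1) j - dd 2 1 j.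
  move=> j; rewrite depth_ssub; congr (_ - _).
    exact: (congr1 (fun h => h j) (depth_smul og1 of1)).
  exact: (congr1 (fun h => h j) (depth_tmon 2 1)).
have h2 : forall j, depth (ssub (smul g (shift f)) (tmon 2 qq)) 2 j
    = cp (depth g 1) (fun i => qq * shl b1 b2 b3 b4 Lam (depth f 1) i) j - dd 2 qq j.
  move=> j; rewrite depth_ssub; congr (_ - _).
    rewrite -(depth_shift1 f).
    exact: (congr1 (fun h => h j) (depth_smul og1 ofb)).
  exact: (congr1 (fun h => h j) (depth_tmon 2 qq)).
have eL := eq_cp h1 (eq_cp h2 (eq_cp (hz b5) (eq_cp (hz b6) (eq_cp (hz b7) (eq_cp (hz b8) h7))))).
have hz2 : forall a c j, ord_ge 2 a -> depth (ssub a (tmon 0 c)) 0 j = 0 - dd 0 c j.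
  move=> a c j ha; rewrite depth_ssub; congr (_ - _).
    exact: (congr1 (fun h => h j) (depth_zero ha (isT : (0 < 2)%N))).
  exact: (congr1 (fun h => h j) (depth_tmon 0 c)).
have hg : forall c j, depth (ssub g (tmon 1 c)) 1 j = depth g 1 j - dd 1 c j.
  move=> c j; rewrite depth_ssub; congr (_ - _).
  exact: (congr1 (fun h => h j) (depth_tmon 1 c)).
have eR := eq_cp (fun j => hz2 _ 1 j (ord_smul og1 of1)) (eq_cp (fun j => hz2 _ 1 j (ord_smul og1 ofb))
  (eq_cp (hg b1) (eq_cp (hg b2) (eq_cp (hg b3) (eq_cp (hg b4) h7))))).
have H3 := etrans (esym (eL m)) (etrans H2 (eR m)).
have H4 := etrans (esym (raw1L Kb1 Kb2 Kb3 Kb4 KLam KD (depth f 1) (depth g 1) qq b5 b6 b7 b8 m))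
   (etrans H3 (raw1R Kb1 Kb2 Kb3 Kb4 KLam KD (depth g 1) m)).
have hq : qq * (b5 * b6 * b7 * b8) = gBB b1 b2 b3 b4.
  exact: (gen_hq b1 b2 b3 b4 Kb5 Kb6 Kb7 Kb8).
rewrite /E1 -hq.
apply/eqP; rewrite subr_eq0; apply/eqP; exact: H4.
Qed.

Lemma hE2 f g : ord_ge 1 f -> ord_ge 1 g -> qPA1_eq2 f g ->
  forall m, E2 b1 b2 b3 b4 Lam (depth f 1) (depth g 1) m = 0.
Proof.
move=> of1 og1 eq2 m.
have ofb := ord_shift of1.
have ogb := ord_shift og1.
unfold qPA1_eq2 in eq2; cbv zeta in eq2.
have H := congr1 (fun s => depth s 4 m) eq2; cbv beta in H.
have o1 : ord_ge 2 (ssub (smul g (shift f)) (tmon 2 qq)).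
  by apply: ord_ssub; [exact: ord_smul og1 ofb | apply: ord_tmon].
have o2 : ord_ge 2 (ssub (smul (shift g) (shift f)) (tmon 2 (qq ^+ 2))).
  by apply: ord_ssub; [exact: ord_smul ogb ofb | apply: ord_tmon].
have r3 : forall c, ord_ge 1 (ssub (shift f) (tmon 1 c)).
  by move=> c; apply: ord_ssub; [exact: ofb | apply: ord_tmon].
have L1 := congr1 (fun h => h m) (depth_prod6 o1 o2 (ord_0 (ssub (shift f) (tmon 0 b5^-1)))
   (ord_0 (ssub (shift f) (tmon 0 b6^-1))) (ord_0 (ssub (shift f) (tmon 0 b7^-1)))
   (ord_0 (ssub (shift f) (tmon 0 b8^-1)))).
have L2 := congr1 (fun h => h m) (depth_prod6 (ord_0 (ssub (smul g (shift f)) (tmon 0 1)))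
   (ord_0 (ssub (smul (shift g) (shift f)) (tmon 0 1)))
   (r3 (b1^-1 * qq)) (r3 (b2^-1 * qq)) (r3 (b3^-1 * qq)) (r3 (b4^-1 * qq))).
cbv beta in L1; cbv beta in L2.
have H2 := etrans (esym L1) (etrans H L2).
clear L1 L2 H.
have h7 : forall j, depth (tmon 0 1) 0 j = dd 0 1 j.
  by move=> j; exact: (congr1 (fun h => h j) (depth_tmon 0 1)).
have hz : forall a c j, ord_ge 1 a -> depth (ssub a (tmon 0 c)) 0 j = 0 - dd 0 c j.
  move=> a c j ha; rewrite depth_ssub; congr (_ - _).
    exact: (congr1 (fun h => h j) (depth_zero ha (isT : (0 < 1)%N))).
  exact: (congr1 (fun h => h j) (depth_tmon 0 c)).
have hz2 : forall a c j, ord_ge 2 a -> depth (ssub a (tmon 0 c)) 0 j = 0 - dd 0 c j.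
  move=> a c j ha; rewrite depth_ssub; congr (_ - _).
    exact: (congr1 (fun h => h j) (depth_zero ha (isT : (0 < 2)%N))).
  exact: (congr1 (fun h => h j) (depth_tmon 0 c)).
have h1 : forall j, depth (ssub (smul g (shift f)) (tmon 2 qq)) 2 j
    = cp (depth g 1) (fun i => qq * shl b1 b2 b3 b4 Lam (depth f 1) i) j - dd 2 qq j.
  move=> j; rewrite depth_ssub; congr (_ - _).
    rewrite -(depth_shift1 f).
    exact: (congr1 (fun h => h j) (depth_smul og1 ofb)).
  exact: (congr1 (fun h => h j) (depth_tmon 2 qq)).
have h2 : forall j, depth (ssub (smul (shift g) (shift f)) (tmon 2 (qq ^+ 2))) 2 j
    = cp (fun i => qq * shl b1 b2 b3 b4 Lam (depth g 1) i)
         (fun i => qq * shl b1 b2 b3 b4 Lam (depth f 1) i) j - dd 2 (qq ^+ 2) j.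
  move=> j; rewrite depth_ssub; congr (_ - _).
    rewrite -(depth_shift1 f) -(depth_shift1 g).
    exact: (congr1 (fun h => h j) (depth_smul ogb ofb)).
  exact: (congr1 (fun h => h j) (depth_tmon 2 (qq ^+ 2))).
have hf : forall c j, depth (ssub (shift f) (tmon 1 c)) 1 j
    = qq * shl b1 b2 b3 b4 Lam (depth f 1) j - dd 1 c j.
  move=> c j; rewrite depth_ssub; congr (_ - _).
    exact: (congr1 (fun h => h j) (depth_shift1 f)).
  exact: (congr1 (fun h => h j) (depth_tmon 1 c)).
have eL := eq_cp h1 (eq_cp h2 (eq_cp (fun j => hz _ b5^-1 j ofb) (eq_cp (fun j => hz _ b6^-1 j ofb)
  (eq_cp (fun j => hz _ b7^-1 j ofb) (eq_cp (fun j => hz _ b8^-1 j ofb) h7))))).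
have eR := eq_cp (fun j => hz2 _ 1 j (ord_smul og1 ofb)) (eq_cp (fun j => hz2 _ 1 j (ord_smul ogb ofb))
  (eq_cp (hf (b1^-1 * qq)) (eq_cp (hf (b2^-1 * qq)) (eq_cp (hf (b3^-1 * qq)) (eq_cp (hf (b4^-1 * qq)) h7))))).
have H3 := etrans (esym (eL m)) (etrans H2 (eR m)).
have H4 := etrans (esym (raw2L Kb1 Kb2 Kb3 Kb4 KLam KD (depth f 1) (depth g 1) qq b5 b6 b7 b8 m))
   (etrans H3 (raw2R Kb1 Kb2 Kb3 Kb4 KLam KD (depth f 1) qq m)).
have H5 := gen_h2 Kb5 Kb6 Kb7 Kb8 KBB H4.
rewrite /E2.
apply/eqP; rewrite subr_eq0; apply/eqP; exact: H5.
Qed.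

Theorem mainTheorem5 (f g : ser) :
  formal_solution f g -> f 1%N 1 = 1 -> g 1%N 1 = Lam ->
  (f 1%N 0 = Feq /\ f 1%N (-1) = mu /\ (forall i : int, i <= -2 -> f 1%N i = 0)) /\
  (g 1%N 0 = Geq /\ g 1%N (-1) = BB / Lam * mu /\ (forall i : int, i <= -2 -> g 1%N i = 0)).
Proof.
move=> [sf [sg [eq1 eq2]]] hf1 hg1.
have of1 : ord_ge 1 f.
  move=> n i hn; have h0 : n = 0%N by lia.
  by rewrite h0; apply: sf.
have og1 : ord_ge 1 g.
  move=> n i hn; have h0 : n = 0%N by lia.
  by rewrite h0; apply: sg.
have e1 := hE1 of1 og1 eq1.
have e2 := hE2 of1 og1 eq2.
have hF0 : depth f 1 0%N = 1 by exact: hf1.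
have hG0 : depth g 1 0%N = Lam by exact: hg1.
have U := uniqFG Kb1 Kb2 Kb3 Kb4 KLam KD Klam hF0 hG0 e1 e2.
have tail : forall i : int, i <= -2 -> exists m, [/\ (3 <= m)%N & i = 1%:Z - m%:Z].
  move=> i hi; exists (absz (1 - i)); split; first by lia.
  by rewrite gez0_abs; [rewrite opprB addrC subrK | lia].
split; [split; [|split] | split; [|split]].
- have h := (U 1%N).1; rewrite /depth subrr in h; rewrite h.
  rewrite /Fs /gFeq /Feq /gBB /BB /gS1p /S1p /gS3m /S3m /gS1m /S1m; reflexivity.
- have h := (U 2%N).1; rewrite /depth in h.
  have e : (1%:Z - 2%:Z : int) = -1 by [].
  rewrite e in h; rewrite h.
  rewrite /Fs /gmu /mu /gBB /BB; reflexivity.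
- move=> i hi; have [m [hm ei]] := tail i hi; rewrite ei.
  have h := (U m).1; rewrite /depth in h; rewrite h.
  have -> : m = (m - 3).+3 by lia.
  reflexivity.
- have h := (U 1%N).2; rewrite /depth subrr in h; rewrite h.
  rewrite /Gs /gGeq /Geq /gBB /BB /gS1p /S1p /gS3p /S3p /gS1m /S1m; reflexivity.
- have h := (U 2%N).2; rewrite /depth in h.
  have e : (1%:Z - 2%:Z : int) = -1 by [].
  rewrite e in h; rewrite h.
  rewrite /Gs /gmu /mu /gBB /BB; reflexivity.
- move=> i hi; have [m [hm ei]] := tail i hi; rewrite ei.
  have h := (U m).2; rewrite /depth in h; rewrite h.
  have -> : m = (m - 3).+3 by lia.
  reflexivity.
Qed.
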